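(* Let $n\ge2$, let $P$ be a partial $n$-Metric on a set $X$, let $x_o\in X$ and let $f:X\to X$. Let $r\in\mathbb{R}$ and let $\varphi:[r,+\infty)\to[0,+\infty)$ be a non-decreasing function with $\varphi(t)=0$ if and only if $t=r$. Suppose that for all natural numbers $i,j$, $$r\le P(\langle f^i(x_o)\rangle^n)\quad\text{and}\quad P(\langle f^{i+1}(x_o)\rangle^{n-1},f^{j+1}(x_o))\le P(\langle f^i(x_o)\rangle^{n-1},f^j(x_o))-\varphi\big(P(\langle f^i(x_o)\rangle^{n-1},f^j(x_o))\big)$$ (i.e. $f$ is an orbital $\varphi_r$-contraction at $x_o$). Then the orbit $\{f^i(x_o)\}_{i\in\mathbb{N}}$ is a Cauchy sequence (i.e. $f$ is a Cauchy function at $x_o$).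
   Context: Notation: $\langle a\rangle^k$ denotes the $k$-tuple $(a,\dots,a)$ inserted into an argument list; $f^0(x_o)=x_o$, $f^{i+1}(x_o)=f(f^i(x_o))$. A partial $n$-Metric on $X$ is a function $P:X^n\to\mathbb{R}$ such that for all $x_1,\dots,x_n,a\in X$: (1) $P(\langle x_1\rangle^n)\le P(\langle x_1\rangle^{n-1},x_2)$; (2) $P$ is invariant under permutations of its arguments; (3) $P(\langle x_1\rangle^{n-1},x_2)=P(\langle x_1\rangle^n)$ and $P(\langle x_2\rangle^{n-1},x_1)=P(\langle x_2\rangle^n)$ iff $x_1=x_2$; (4) $P(x_1,\dots,x_n)\le P(x_1,\dots,x_{n-1},a)+P(\langle a\rangle^{n-1},x_n)-P(\langle a\rangle^n)$. A sequence $\{x_i\}$ is Cauchy if there is $r'\in\mathbb{R}$ (its central distance) such that for every $\epsilon>0$ there is $N$ with $|P(x_{i_1},\dots,x_{i_n})-r'|<\epsilon$ for all $i_1,\dots,i_n>N$. *)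

(* Defs.v *)
From Stdlib Require Import Reals.
From mathcomp Require Import all_boot all_fingroup.
Set Implicit Arguments. Unset Strict Implicit. Unset Printing Implicit Defensive.
Local Open Scope R_scope.

Definition cst_tup {X : Type} (n : nat) (a : X) : {ffun 'I_n -> X} := [ffun _ => a].

Definition tup1 {X : Type} (n : nat) (a b : X) : {ffun 'I_n -> X} :=
  [ffun i : 'I_n => if (val i < n.-1)%N then a else b].

Definition repl {X : Type} (n : nat) (x : {ffun 'I_n -> X}) (i : 'I_n) (a : X)
  : {ffun 'I_n -> X} := [ffun j => if j == i then a else x j].

Definition partial_nmetric {X : Type} (n : nat) (P : {ffun 'I_n -> X} -> R) : Prop :=
  (forall x1 x2 : X, (P (cst_tup n x1) <= P (tup1 n x1 x2))) /\
  (forall (x : {ffun 'I_n -> X}) (s : {perm 'I_n}),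
      P [ffun i => x (s i)] = P x) /\
  (forall x1 x2 : X,
      (P (tup1 n x1 x2) = P (cst_tup n x1) /\ P (tup1 n x2 x1) = P (cst_tup n x2))
      <-> x1 = x2) /\
  (forall (x : {ffun 'I_n -> X}) (a : X) (i : 'I_n), val i = n.-1 ->
      P x <= P (repl x i a) + P (tup1 n a (x i)) - P (cst_tup n a)).

Definition pn_cauchy {X : Type} (n : nat) (P : {ffun 'I_n -> X} -> R)
  (u : nat -> X) : Prop :=
  exists r' : R, forall eps : R, 0 < eps ->
    exists N : nat, forall idx : {ffun 'I_n -> nat},
      (forall k, (N < idx k)%N) ->
      Rabs (P [ffun k => u (idx k)] - r') < eps.

(* Main.v *)
Require Import Defs.
From Stdlib Require Import Reals Lra Classical.
From mathcomp Require Import all_boot all_fingroup.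
Local Open Scope R_scope.
From mathcomp Require Import zify.

Lemma tuple_bound (X : Type) (n : nat) (hn: (2<=n)%N) (P : {ffun 'I_n -> X} -> R)
  (hP : partial_nmetric P) (z : {ffun 'I_n -> X}) (b : X) (e : R)
 (H1 : forall k, P (tup1 n b (z k)) - P (cst_tup n b) <= e)
 (H2 : forall k, P (tup1 n (z k) b) - P (cst_tup n (z k)) <= e) :
 P (cst_tup n b) - INR n * e <= P z <= P (cst_tup n b) + INR n * e.
Proof.
case: hP => [_ [Hperm [_ H4]]].
pose w m := [ffun k : 'I_n => if (val k < m)%N then z k else b].
have hl : (n.-1 < n)%N by case: n hn {H1 H2 z P Hperm H4 w} => // n' _.
pose lst := Ordinal hl.
suff: forall m, (m <= n)%N -> P (cst_tup n b) - INR m * e <= P (w m) <= P (cst_tup n b) + INR m * e.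
  move=> /(_ n (leqnn n)).
  have -> : w n = z by apply/ffunP => k; rewrite ffunE ltn_ord.
  done.
elim=> [_|m IH hm].
  have -> : w 0%N = cst_tup n b by apply/ffunP => k; rewrite !ffunE ltn0.
  simpl INR; lra.
have hm' : (m < n)%N by [].
have {}IH := IH (ltnW hm).
pose im := Ordinal hm'.
pose s := tperm im lst.
have key : forall i, i != lst -> w m.+1 (s i) = w m (s i).
  move=> i ne; rewrite !ffunE.
  have ne2 : val (s i) != m.
    apply/negP => /eqP h.
    have : s i = im by apply: val_inj.
    move=> h2; move: ne; rewrite -(tpermK im lst i) /= -/s h2 tpermL eqxx //.
  by rewrite ltnS leq_eqVlt (negbTE ne2).
have E1 : repl [ffun i => w m.+1 (s i)] lst b = [ffun i => w m (s i)].
  apply/ffunP => i; rewrite /repl ffunE [in RHS]ffunE.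
  case: (eqVneq i lst) => [->|ne]; last by rewrite ffunE key.
  by rewrite tpermR ffunE /= ltnn.
have E2 : repl [ffun i => w m (s i)] lst (z im) = [ffun i => w m.+1 (s i)].
  apply/ffunP => i; rewrite /repl ffunE [in RHS]ffunE.
  case: (eqVneq i lst) => [->|ne]; last by rewrite ffunE key.
  by rewrite tpermR ffunE /= ltnSn.
have U := H4 [ffun i => w m.+1 (s i)] b lst erefl.
rewrite E1 !Hperm ffunE tpermR in U.
have L := H4 [ffun i => w m (s i)] (z im) lst erefl.
rewrite E2 !Hperm ffunE tpermR in L.
have e1 : w m im = b by rewrite ffunE /= ltnn.
have e2 : w m.+1 im = z im by rewrite ffunE /= ltnSn.
rewrite e1 in L; rewrite e2 in U.
have h1 := H1 im. have h2 := H2 im.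
rewrite S_INR; split; nra.
Qed.

Theorem lemma5p12 (X : Type) (n : nat) (hn : (2 <= n)%N)
  (P : {ffun 'I_n -> X} -> R) (hP : partial_nmetric P)
  (xo : X) (f : X -> X) (r : R) (phi : R -> R)
  (hphi_nonneg : forall t : R, r <= t -> 0 <= phi t)
  (hphi_mono : forall s t : R, r <= s -> s <= t -> phi s <= phi t)
  (hphi_zero : forall t : R, r <= t -> (phi t = 0 <-> t = r))
  (hlow : forall i : nat, r <= P (cst_tup n (iter i f xo)))
  (hcontr : forall i j : nat,
     P (tup1 n (iter i.+1 f xo) (iter j.+1 f xo))
      <= P (tup1 n (iter i f xo) (iter j f xo))
         - phi (P (tup1 n (iter i f xo) (iter j f xo)))) :
  pn_cauchy P (fun i => iter i f xo).
Proof.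
have [H1 [_ [_ H4]]] := hP.
pose u i := iter i f xo.
pose a i j := P (tup1 n (u i) (u j)).
have hl : (n.-1 < n)%N by lia.
pose lst := Ordinal hl.
have hcst : forall i j, P (cst_tup n (u i)) <= a i j by move=> i j; exact: H1.
have hA : forall i j, r <= a i j.
  move=> i j; have := hcst i j; have := hlow i; rewrite /u; lra.
have htri : forall i j k, a i j <= a i k + a k j - r.
  move=> i j k.
  have U := H4 (tup1 n (u i) (u j)) (u k) lst erefl.
  have E : repl (tup1 n (u i) (u j)) lst (u k) = tup1 n (u i) (u k).
    apply/ffunP => t; rewrite /repl !ffunE.
    case: (eqVneq t lst) => [->|ne]; first by rewrite /= ltnn.
    have : (val t < n.-1)%N.
      have ht : (val t < n)%N := ltn_ord t.
      have : val t != n.-1 by apply: contra ne => /eqP h; apply/eqP/val_inj.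
      move=> /eqP; lia.
    by move=> ->.
  have E2 : (tup1 n (u i) (u j)) lst = u j by rewrite ffunE /= ltnn.
  rewrite E E2 in U.
  have := hlow k; rewrite /a; rewrite /u in U |- *; lra.
have hc : forall i j, a i.+1 j.+1 <= a i j - phi (a i j) := hcontr.
have hB : forall i j d, 0 < d -> exists K, forall k, (K <= k)%N -> a (i+k)%N (j+k)%N < r + d.
  move=> i j d hd.
  pose g k := a (i+k)%N (j+k)%N.
  have gdec : forall k, g k.+1 <= g k - phi (g k).
    move=> k; rewrite /g !addnS; exact: hc.
  have gmono : forall K m, g (K+m)%N <= g K.
    move=> K; elim=> [|m IH]; first by rewrite addn0; lra.
    rewrite addnS; have := gdec (K+m)%N; have := hphi_nonneg _ (hA (i+(K+m))%N (j+(K+m))%N).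
    rewrite /g in IH |- *; lra.
  case: (classic (exists K, g K < r + d)) => [[K hK]|nK].
    exists K => k hk; rewrite -(subnKC hk); have := gmono K (k-K)%N; rewrite /g in hK |- *; lra.
  have gall : forall k, r + d <= g k.
    move=> k; apply: Rnot_lt_le => h; apply: nK; exists k; exact: h.
  have hc0 : 0 < phi (r + d).
    have := hphi_nonneg (r+d) ltac:(lra).
    have : phi (r + d) <> 0 by move=> /(hphi_zero (r+d) ltac:(lra)) => ?; lra.
    lra.
  have gbound : forall k, g k <= g 0%N - INR k * phi (r + d).
    elim=> [|k IH]; first by simpl INR; lra.
    rewrite S_INR; have := gdec k; have := hphi_mono (r+d) (g k) ltac:(lra) (gall k); lra.
  have [k hk] := INR_archimed (phi (r+d)) (g 0%N - r) hc0.
  have := gbound k; have := gall k; lra.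
have hC : forall e, 0 < e -> exists N, forall p q, (N <= p)%N -> (N <= q)%N -> a p q < r + e.
  move=> e he.
  have hc0 : 0 < phi (r + e).
    have := hphi_nonneg (r+e) ltac:(lra).
    have : phi (r + e) <> 0 by move=> /(hphi_zero (r+e) ltac:(lra)) => ?; lra.
    lra.
  have [K1 hK1] := hB 0%N 1%N (phi (r+e) / 3) ltac:(lra).
  have [K2 hK2] := hB 1%N 0%N (phi (r+e) / 3) ltac:(lra).
  exists (maxn K1 K2) => p q hp hq.
  case: (classic (a p q < r + e)) => // h.
  have h' : r + e <= a p q by lra.
  have t1 := htri p q p.+1. have t2 := htri p.+1 q q.+1. have t3 := hc p q.
  have t4 := hphi_mono (r+e) (a p q) ltac:(lra) h'.
  have t5 := hK1 p ltac:(lia). have t6 := hK2 q ltac:(lia).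
  rewrite add0n add1n in t5. rewrite add0n add1n in t6.
  lra.
exists r => eps heps.
have hn0 := pos_INR n.
pose e := eps / (INR n + 1).
have he : 0 < e by rewrite /e; apply: Rdiv_lt_0_compat; lra.
have he2 : INR n * e + e = eps by rewrite /e; field; lra.
have [N hN] := hC e he.
exists N => idx hidx.
have hidx' : forall k, (N <= idx k)%N by move=> k; have := hidx k; lia.
have T := @tuple_bound X n hn P hP [ffun k => u (idx k)] (u N) e.
have T' : P (cst_tup n (u N)) - INR n * e <= P [ffun k => u (idx k)] <= P (cst_tup n (u N)) + INR n * e.
  apply: T => k; rewrite ffunE.
    have := hN N (idx k) (leqnn N) (hidx' k); have := hlow N; rewrite /a /u; lra.
  have := hN (idx k) N (hidx' k) (leqnn N); have := hlow (idx k); rewrite /a /u; lra.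
change (Rabs (P [ffun k => u (idx k)] - r) < eps).
have := hcst N N; have := hN N N (leqnn N) (leqnn N); have := hlow N.
rewrite /u in T' |- *.
move=> *; apply: Rabs_def1; lra.
Qed.
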